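(* Let $q$ be a prime power, $\chi$ a multiplicative character of $\mathbb{F}_q^*$ and $\lambda$ an additive character of $\mathbb{F}_q$. Then, as formal power series in $u$, \[ 1+\sum_{n=1}^{\infty}\frac{u^n}{|GL(n,q)|}\sum_{g\in GL(n,q)}\chi(\det g)\,\lambda(\operatorname{tr} g) = \begin{cases} \dfrac{1}{1-u} & \text{if } \lambda,\chi \text{ are both trivial},\\[1mm] 1 & \text{if } \lambda \text{ is trivial and } \chi \text{ nontrivial},\\[1mm] \prod_{i\ge 1}\left(1+\dfrac{u\,G(\chi,\lambda)}{q^i}\right) & \text{if } \lambda \text{ is nontrivial}.\end{cases}\]
   Context: $GL(n,q)$ is the group of invertible $n\times n$ matrices over $\mathbb{F}_q$. The Gauss sum is $G(\chi,\lambda)=\sum_{x\in\mathbb{F}_q^*}\chi(x)\lambda(x)$. *)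

(* Defs.v *)
From HB Require Import structures.
From mathcomp Require Import all_boot all_order all_algebra all_field.
Set Implicit Arguments. Unset Strict Implicit. Unset Printing Implicit Defensive.
Import Order.TTheory GRing.Theory Num.Theory.
Local Open Scope ring_scope.

(* Complex values are taken in algC (algebraic complex numbers), which
   contains all values of characters of finite abelian groups. *)

(* chi : F_q^* -> C^* extended to F by 0 (only used on units). *)
Definition chi_ext (F : finFieldType) (chi : {unit F} -> algC) (x : F) : algC :=
  match insub x with Some u => chi u | None => 0 end.

Definition GLset (F : finFieldType) (n : nat) : {set 'M[F]_n} :=
  [set A : 'M[F]_n | A \in unitmx].

(* Coefficient of u^n of the LHS series:
   1 + sum_{n>=1} u^n/|GL(n,q)| sum_{g in GL(n,q)} chi(det g) lam(tr g). *)
Definition lhs_coef (F : finFieldType) (chi : {unit F} -> algC) (lam : F -> algC)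
    (n : nat) : algC :=
  if n == 0%N then 1 else
  (#|GLset F n|%:R)^-1 *
    \sum_(g in GLset F n) chi_ext chi (\det g) * lam (\tr g).

Definition gauss_sum (F : finFieldType) (chi : {unit F} -> algC) (lam : F -> algC) : algC :=
  \sum_(x : {unit F}) chi x * lam (val x).

Definition partial_prod (G : algC) (q : nat) (N : nat) : {poly algC} :=
  \prod_(1 <= i < N.+1) (1 + (G / (q%:R ^+ i)) *: 'X).

Definition converges_to (s : nat -> algC) (l : algC) : Prop :=
  forall eps : algC, 0 < eps -> exists N0 : nat, forall N : nat, (N0 <= N)%N -> `|s N - l| < eps.

(* The coefficient of u^n of the infinite product prod_{i>=1}(1 + u G/q^i)
   (as a formal power series) is the limit of the coefficients of the partial
   products. *)
Definition infprod_coef_is (G : algC) (q : nat) (n : nat) (c : algC) : Prop :=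
  converges_to (fun N => (partial_prod G q N)`_n) c.

(* Main.v *)
Require Import Defs.
From HB Require Import structures.
From mathcomp Require Import all_boot all_order all_algebra all_field.
From mathcomp Require Import ring.
Import Order.TTheory GRing.Theory Num.Theory.
Local Open Scope ring_scope.
Set Implicit Arguments. Unset Strict Implicit. Unset Printing Implicit Defensive.

Lemma sum_shift0 (T : finType) (f : T -> algC) (h : T -> T) (k : algC) :
  injective h -> (forall x, f (h x) = k * f x) -> k != 1 -> \sum_x f x = 0.
Proof.
move=> hinj hf k1.
have E : \sum_x f x = k * \sum_x f x.
  rewrite {1}(reindex_inj hinj) mulr_sumr; apply: eq_bigr => x _; exact: hf.
have : (1 - k) * \sum_x f x = 0 by rewrite mulrBl mul1r -E subrr.
by move/eqP; rewrite mulf_eq0 subr_eq0 eq_sym (negbTE k1) /= => /eqP.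
Qed.

Section Chi.
Variables (F : finFieldType) (chi : {unit F} -> algC).
Hypothesis chi_mul : forall x y : {unit F}, chi (x * y)%g = chi x * chi y.
Hypothesis chi_one : chi 1%g = 1.

Lemma chi_ext0 : chi_ext chi 0 = 0.
Proof. by rewrite /chi_ext insubF // unitr0. Qed.

Lemma chi_extU (u : {unit F}) : chi_ext chi (val u) = chi u.
Proof. by rewrite /chi_ext valK. Qed.

Lemma chi_ext1 : chi_ext chi 1 = 1.
Proof.
rewrite /chi_ext; case: insubP => [u _ hu|]; last by rewrite unitr1.
by rewrite -chi_one; congr chi; apply: val_inj; rewrite hu.
Qed.

Lemma chi_extM x y : chi_ext chi (x * y) = chi_ext chi x * chi_ext chi y.
Proof.
have [->|x0] := eqVneq x 0; first by rewrite mul0r chi_ext0 mul0r.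
have [->|y0] := eqVneq y 0; first by rewrite mulr0 chi_ext0 mulr0.
have ux : x \is a GRing.unit by rewrite unitfE.
have uy : y \is a GRing.unit by rewrite unitfE.
have -> : x = val (Sub x ux : {unit F}) by [].
have -> : y = val (Sub y uy : {unit F}) by [].
rewrite !chi_extU -chi_mul -chi_extU; congr chi_ext.
Qed.

End Chi.


Section Mat.
Variable F : finFieldType.

Lemma block_sum m (g : 'M[F]_(1 + m) -> algC) :
  \sum_A g A = \sum_(a : F) \sum_(b : 'rV[F]_m) \sum_(c : 'cV[F]_m) \sum_(D : 'M[F]_m)
     g (block_mx a%:M b c D).
Proof.
pose blk (p : F * 'rV[F]_m * 'cV[F]_m * 'M[F]_m) : 'M[F]_(1 + m) :=
  block_mx p.1.1.1%:M p.1.1.2 p.1.2 p.2.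
pose unb (A : 'M[F]_(1 + m)) : F * 'rV[F]_m * 'cV[F]_m * 'M[F]_m :=
  (ulsubmx A 0 0, ursubmx A, dlsubmx A, drsubmx A).
have bij : bijective blk.
  exists unb.
    case=> [[[a b] c] D]; rewrite /unb /blk /= block_mxKul block_mxKur block_mxKdl block_mxKdr.
    by rewrite mxE eqxx mulr1n.
  move=> A; rewrite /unb /blk /= -mx11_scalar; exact: submxK.
rewrite (reindex blk) /=; last by apply: onW_bij.
by rewrite [RHS]pair_bigA [RHS]pair_bigA [RHS]pair_bigA.
Qed.
End Mat.


Section Mat2.
Variable F : finFieldType.

Lemma blk_fact m (X : 'M[F]_1) (b : 'rV_m) (c : 'cV_m) (D : 'M_m) (w : 'cV_m) :
  block_mx 1 0 w 1 *m block_mx X b c D = block_mx X b (w *m X + c) (w *m b + D).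
Proof. by rewrite mulmx_block !mul1mx !mul0mx !addr0. Qed.

Lemma det_blk1 m (w : 'cV[F]_m) : \det (block_mx 1 0 w 1 : 'M_(1 + m)) = 1.
Proof. by rewrite det_lblock !det1 mulr1. Qed.

Lemma exists_w m (b : 'rV[F]_m) s : b != 0 -> exists w : 'cV_m, \tr (w *m b) = s.
Proof.
move=> hb.
have [j hj] : exists j, b 0 j != 0.
  apply/existsP; apply: contraR hb => /existsPn H; apply/eqP/matrixP => i k.
  by rewrite (ord1 i) mxE; apply/eqP; move: (H k); rewrite negbK.
exists (\col_i (if i == j then s / b 0 j else 0)).
rewrite mxtrace_mulC /mxtrace big_ord1 mxE (bigD1 j) //= big1 => [|k hk].
  by rewrite mxE eqxx addr0 mulrC divfK.
by rewrite mxE (negbTE hk) mulr0.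
Qed.

End Mat2.


Section Main.
Variables (F : finFieldType) (chi : {unit F} -> algC) (lam : F -> algC).
Hypothesis chi_mul : forall x y : {unit F}, chi (x * y)%g = chi x * chi y.
Hypothesis chi_one : chi 1%g = 1.
Hypothesis lam_add : forall x y : F, lam (x + y) = lam x * lam y.
Hypothesis lam_zero : lam 0 = 1.

Definition fM n (A : 'M[F]_n) := chi_ext chi (\det A) * lam (\tr A).
Definition SM n := \sum_(A : 'M[F]_n) fM A.
Definition Gs := \sum_(x : F) chi_ext chi x * lam x.

Lemma gaussE : gauss_sum chi lam = Gs.
Proof.
rewrite /Gs (bigID (fun x : F => x \is a GRing.unit)) /= [X in _ + X]big1 ?addr0; last first.
  by move=> x hx; rewrite /chi_ext insubF ?(negbTE hx) // mul0r.
rewrite (reindex_omap (val : {unit F} -> F) insub); last first.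
  move=> x hx; case: insubP => [u _ hu|]; last by rewrite hx.
  by rewrite /=; congr Some; exact: hu.
rewrite /gauss_sum; apply: eq_big => [u|u _]; first by rewrite (valP u) valK eqxx.
by rewrite chi_extU.
Qed.

Lemma GLsumE n : \sum_(g in GLset F n) chi_ext chi (\det g) * lam (\tr g) = SM n.
Proof.
rewrite big_mkcond; apply: eq_bigr => A _; rewrite inE unitmxE unitfE /fM.
case: ifP => // /negbFE/eqP ->; by rewrite chi_ext0 mul0r.
Qed.

Variable s : F.
Hypothesis hs : lam s != 1.

Lemma lam_tr_sum m (a : F) : a != 0 ->
  \sum_(b : 'rV[F]_m) \sum_(c : 'cV[F]_m) lam (\tr ((a^-1 *: c) *m b)) = (#|F| ^ m)%:R.
Proof.
move=> a0; rewrite (bigD1 (0 : 'rV[F]_m)) //= [X in _ + X]big1 => [|b hb].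
  rewrite addr0 (eq_bigr (fun _ => 1)) => [|c _]; last by rewrite mulmx0 mxtrace0.
  by rewrite sumr_const card_mx muln1.
have [w hw] := exists_w s hb.
apply: (@sum_shift0 _ (fun c => lam (\tr ((a^-1 *: c) *m b))) (fun c => c + a *: w) (lam s)) => //.
  exact: addIr.
move=> c /=; rewrite scalerDr scalerA mulVf // scale1r mulmxDl mxtraceD lam_add hw.
by rewrite mulrC.
Qed.

Lemma a0_piece m :
  \sum_(b : 'rV[F]_m) \sum_(c : 'cV[F]_m) \sum_(D : 'M[F]_m) fM (block_mx (0 : F)%:M b c D) = 0.
Proof.
apply: big1 => b _; apply: big1 => c _.
have [->|hb] := eqVneq b 0.
  apply: big1 => D _.
  by rewrite /fM det_lblock det_scalar1 mul0r chi_ext0 mul0r.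
have [w hw] := exists_w s hb.
apply: (@sum_shift0 _ (fun D => fM (block_mx (0 : F)%:M b c D)) (fun D => w *m b + D) (lam s)) => //.
  exact: addrI.
move=> D /=.
have E : block_mx (0 : F)%:M b c (w *m b + D) = block_mx 1 0 w 1 *m block_mx (0 : F)%:M b c D.
  by rewrite blk_fact mul_mx_scalar scale0r add0r.
rewrite /fM {1}E det_mulmx det_blk1 mul1r !mxtrace_block mxtraceD hw.
by rewrite addrCA lam_add mulrCA.
Qed.

Lemma a_piece m (a : F) : a != 0 ->
  \sum_(b : 'rV[F]_m) \sum_(c : 'cV[F]_m) \sum_(D : 'M[F]_m) fM (block_mx a%:M b c D) =
  chi_ext chi a * lam a * SM m * (#|F| ^ m)%:R.
Proof.
move=> a0.
have inner : forall (b : 'rV[F]_m) (c : 'cV[F]_m), \sum_(D : 'M[F]_m) fM (block_mx a%:M b c D) =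
   chi_ext chi a * lam a * SM m * lam (\tr ((a^-1 *: c) *m b)).
  move=> b c; set w := a^-1 *: c.
  rewrite (reindex_inj (addrI (w *m b))) /SM !mulr_sumr mulr_suml; apply: eq_bigr => D _.
  have E : block_mx a%:M b c (w *m b + D) = block_mx 1 0 w 1 *m block_mx a%:M b 0 D.
    by rewrite blk_fact mul_mx_scalar addr0 /w scalerA divff // scale1r.
  rewrite /fM {1}E det_mulmx det_blk1 mul1r det_ublock det_scalar1 chi_extM //.
  rewrite mxtrace_block mxtraceD mxtrace_scalar mulr1n !lam_add.
  ring.
under eq_bigr do under eq_bigr do rewrite inner.
under eq_bigr do rewrite -mulr_sumr.
by rewrite -mulr_sumr lam_tr_sum.
Qed.

Lemma SM_rec m : SM (1 + m) = Gs * (#|F| ^ m)%:R * SM m.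
Proof.
rewrite {1}/SM block_sum (bigD1 0) //= a0_piece add0r.
rewrite /Gs [in RHS](bigD1 (0 : F)) //= chi_ext0 mul0r add0r !mulr_suml; apply: eq_bigr => a ha.
by rewrite a_piece // mulrAC.
Qed.

Lemma SM_formula n : SM n = Gs ^+ n * (#|F| ^ 'C(n, 2))%:R.
Proof.
elim: n => [|m IH].
  rewrite /SM (eq_bigr (fun _ => 1)) => [|A _]; last first.
    by rewrite /fM det_mx00 chi_ext1 // /mxtrace big_ord0 lam_zero mulr1.
  by rewrite sumr_const card_mx expn0 expr0 mul1r.
rewrite (SM_rec m) IH binS bin1 exprS expnD natrM.
ring.
Qed.

End Main.


Section Chi2.
Variables (F : finFieldType) (chi : {unit F} -> algC).
Hypothesis chi_mul : forall x y : {unit F}, chi (x * y)%g = chi x * chi y.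
Hypothesis chi_one : chi 1%g = 1.

Lemma chi_sum_zero m (u : {unit F}) : chi u != 1 ->
  \sum_(A : 'M[F]_(1 + m)) chi_ext chi (\det A) = 0.
Proof.
move=> hu.
pose P : 'M[F]_(1 + m) := block_mx (val u)%:M 0 0 1.
pose P' : 'M[F]_(1 + m) := block_mx (val u)^-1%:M 0 0 1.
have HP : P' *m P = 1.
  rewrite /P /P' mulmx_block !mulmx0 !mul0mx !addr0 !add0r !mul1mx -scalar_mxM mulVf.
    exact: (esym (scalar_mx_block 1 m 1)).
  by rewrite -unitfE; exact: (valP u).
apply: (@sum_shift0 _ (fun A => chi_ext chi (\det A)) (fun A => P *m A) (chi u)) => //.
  by move=> A B /(congr1 (mulmx P')); rewrite !mulmxA HP !mul1mx.
move=> A /=; rewrite det_mulmx chi_extM // /P det_ublock det_scalar1 det1 mulr1.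
by rewrite chi_extU.
Qed.

Lemma card_GLset m :
  #|GLset F m.+1| = (#|F| ^ 'C(m.+1, 2) * \prod_(1 <= i < m.+2) (#|F| ^ i - 1))%N.
Proof.
rewrite -card_GL // cardsT /= card_sub; apply: eq_card => A; by rewrite !inE.
Qed.

End Chi2.


Section Conv.
Variables (G : algC) (q : nat).
Hypothesis hq : (1 < q)%N.

Definition tt : algC := (q%:R)^-1.
Definition ee N n := (partial_prod G q N)`_n.
Definition eprev N n := if n is n'.+1 then ee N n' else 0.
Definition cf n : algC := G ^+ n * \prod_(1 <= i < n.+1) ((q%:R ^+ i - 1)^-1).

Lemma e0 n : ee 0 n = (n == 0)%:R.
Proof. by rewrite /ee /partial_prod big_geq // coef1. Qed.

Lemma eS N n : ee N.+1 n = ee N n + G * tt ^+ N.+1 * eprev N n.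
Proof.
rewrite /ee /partial_prod big_nat_recr //= mulrDr mulr1 coefD -scalerAr coefZ coefMX.
rewrite /tt exprVn /eprev /ee /partial_prod; case: n => [|n] //=; by rewrite mulr0.
Qed.

Lemma cf0 : cf 0 = 1.
Proof. by rewrite /cf expr0 big_geq // mul1r. Qed.

Lemma qpos : 0 < (q%:R : algC).
Proof. by rewrite ltr0n; apply: ltn_trans hq. Qed.

Lemma qX1 k : (q%:R : algC) ^+ k.+1 - 1 != 0.
Proof.
rewrite subr_eq0 -natrX pnatr_eq1; apply/eqP => h.
by move: (ltn_expl k.+1 hq); rewrite h.
Qed.

Lemma cfS k : cf k.+1 * ((q%:R : algC) ^+ k.+1 - 1) = G * cf k.
Proof.
rewrite /cf big_nat_recr //= exprS mulrA -!mulrA mulVf ?qX1 // mulr1; ring.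
Qed.

Lemma ident N n : cf n = \sum_(k < n.+1) ee N (n - k) * cf k * tt ^+ (N * k).
Proof.
elim: N n => [|N IH] n.
  rewrite big_ord_recr /= subnn e0 eqxx mul0n expr0 !mulr1 mul1r big1 ?add0r // => k _.
  by rewrite e0 subn_eq0 leqNgt ltn_ord /= !mul0r.
rewrite (IH n).
set a := G * tt ^+ N.+1.
pose r k := if k is j.+1 then a * cf j * tt ^+ (N.+1 * j) else 0.
have split_term : forall k, cf k * tt ^+ (N.+1 * k) = cf k * tt ^+ (N * k) - r k.
  case=> [|j]; first by rewrite !muln0 subr0.
  have tQ : tt ^+ j.+1 * (q%:R ^+ j.+1) = 1.
    by rewrite /tt exprVn mulVf // expf_neq0 // gt_eqF // qpos.
  have e1 : tt ^+ (N.+1 * j.+1) = tt ^+ j.+1 * tt ^+ (N * j.+1) by rewrite mulSn exprD.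
  have e2 : tt ^+ N.+1 * tt ^+ (N.+1 * j) = tt ^+ (N.+1 * j.+1) by rewrite -exprD mulnS.
  rewrite /r /a.
  have -> : G * tt ^+ N.+1 * cf j * tt ^+ (N.+1 * j) = (G * cf j) * (tt ^+ N.+1 * tt ^+ (N.+1 * j)) by ring.
  rewrite e2 e1 -cfS.
  have -> : cf j.+1 * tt ^+ (N * j.+1) - cf j.+1 * ((q%:R : algC) ^+ j.+1 - 1) * (tt ^+ j.+1 * tt ^+ (N * j.+1))
     = cf j.+1 * (tt ^+ j.+1 * tt ^+ (N * j.+1)) + cf j.+1 * tt ^+ (N * j.+1) * (1 - tt ^+ j.+1 * (q%:R ^+ j.+1)) by ring.
  by rewrite tQ subrr mulr0 addr0.
rewrite [RHS](eq_bigr (fun k : 'I_n.+1 => (ee N (n - k) * cf k * tt ^+ (N * k) - ee N (n - k) * r k)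
     + a * eprev N (n - k) * cf k * tt ^+ (N.+1 * k))); last first.
  move=> k _; rewrite eS -/a !mulrDl; congr (_ + _).
  by rewrite -mulrA split_term mulrBr mulrA.
rewrite big_split /= sumrB.
have -> : \sum_(k < n.+1) ee N (n - k) * r k =
          \sum_(k < n.+1) a * eprev N (n - k) * cf k * tt ^+ (N.+1 * k).
  rewrite big_ord_recl big_ord_recr /= subnn /eprev !mulr0 !mul0r add0r addr0.
  apply: eq_bigr => i _; rewrite add0n; have -> : bump 0 i = i.+1 by [].
  by rewrite -[(n - i)%N](subnSK (ltn_ord i)) /=; ring.
by rewrite subrK.
Qed.
Lemma ident2 N n :
  cf n = ee N n + \sum_(k < n) ee N (n - k.+1) * cf k.+1 * tt ^+ (N * k.+1).
Proof.
rewrite (ident N n) big_ord_recl /= subn0 cf0 muln0 expr0 !mulr1; congr (_ + _).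
Qed.

Lemma tt_pos : 0 < tt.
Proof. by rewrite /tt invr_gt0 qpos. Qed.

Lemma ttX_ge0 m : 0 <= tt ^+ m.
Proof. by rewrite exprn_ge0 // ltW // tt_pos. Qed.

Lemma ttX_le1 m : tt ^+ m <= 1.
Proof.
apply: exprn_ile1; first exact: ltW tt_pos.
by rewrite /tt invf_le1 ?qpos // ler1n; apply: ltnW.
Qed.

Lemma eN0 N : ee N 0 = 1.
Proof. elim: N => [|N IH]; first by rewrite e0. by rewrite eS /eprev mulr0 addr0. Qed.

Lemma ebound n : exists B : algC, 0 <= B /\ forall j N, (j <= n)%N -> `|ee N j| <= B.
Proof.
elim: n => [|n [B [B0 HB]]].
  exists 1; split => // j N; rewrite leqn0 => /eqP ->; by rewrite eN0 normr1.
have S0 : 0 <= \sum_(k < n.+1) B * `|cf k.+1|.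
  by apply: sumr_ge0 => k _; rewrite mulr_ge0.
exists (B + `|cf n.+1| + \sum_(k < n.+1) B * `|cf k.+1|); split.
  by rewrite !addr_ge0.
move=> j N; rewrite leq_eqVlt => /orP [/eqP -> | hj]; last first.
  apply: le_trans (HB j N hj) _; rewrite -addrA lerDl addr_ge0 //.
have -> : ee N n.+1 = cf n.+1 - \sum_(k < n.+1) ee N (n.+1 - k.+1) * cf k.+1 * tt ^+ (N * k.+1).
  by rewrite [in cf n.+1](ident2 N n.+1) addrK.
apply: le_trans (ler_normB _ _) _.
rewrite -addrA; apply: ler_wpDl => //; apply: lerD => //.
apply: le_trans (ler_norm_sum _ _ _) _; apply: ler_sum => k _.
rewrite !normrM (ger0_norm (ttX_ge0 _)) -[X in _ <= X]mulr1.
apply: ler_pM; rewrite ?mulr_ge0 ?ttX_ge0 ?ttX_le1 //.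
apply: ler_wpM2r; first by rewrite mulr_ge0. rewrite subSS; apply: HB; exact: leq_subr.
Qed.

Lemma conv n : converges_to (fun N => ee N n) (cf n).
Proof.
move=> eps heps; have [B [B0 HB]] := ebound n.
set K := B * \sum_(k < n) `|cf k.+1|.
have K0 : 0 <= K by rewrite mulr_ge0 // sumr_ge0.
exists (Num.Def.archi_bound (K / eps)) => N hN.
have h1 : `|ee N n - cf n| <= K * tt ^+ N.
  rewrite [in cf n](ident2 N n) opprD addrA subrr add0r normrN.
  apply: le_trans (ler_norm_sum _ _ _) _.
  rewrite /K mulr_sumr mulr_suml; apply: ler_sum => k _.
  rewrite !normrM (ger0_norm (ttX_ge0 _)).
  apply: ler_pM; rewrite ?mulr_ge0 ?ttX_ge0 //.
    apply: ler_wpM2r; first by rewrite mulr_ge0. apply: HB; exact: leq_subr.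
  rewrite mulnS exprD -[X in _ <= X]mulr1; apply: ler_wpM2l; first exact: ttX_ge0.
  exact: ttX_le1.
apply: le_lt_trans h1 _.
have h2 : tt ^+ N <= (N.+1%:R)^-1.
  rewrite /tt exprVn -natrX lef_pV2 ?posrE ?ltr0n ?expn_gt0 ?(ltn_trans _ hq) // ler_nat.
  exact: ltn_expl.
apply: le_lt_trans (ler_wpM2l K0 h2) _.
rewrite ltr_pdivrMr ?ltr0n // -ltr_pdivrMl //.
rewrite mulrC; apply: (lt_le_trans (archi_boundP (x := K / eps) _)); first by rewrite divr_ge0 // ltW.
rewrite ler_nat; exact: leqW.
Qed.

End Conv.

Unset Implicit Arguments. Set Strict Implicit.

Theorem theorem1 (F : finFieldType) (chi : {unit F} -> algC) (lam : F -> algC)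
    (chi_mul : forall x y : {unit F}, chi (x * y)%g = chi x * chi y)
    (chi_one : chi 1%g = 1)
    (lam_add : forall x y : F, lam (x + y) = lam x * lam y)
    (lam_zero : lam 0 = 1) :
  let q := #|F| in
  [/\ ((forall x, lam x = 1) -> (forall x, chi x = 1) ->
         forall n : nat, lhs_coef chi lam n = 1),
      ((forall x, lam x = 1) -> ~ (forall x, chi x = 1) ->
         forall n : nat, lhs_coef chi lam n = (n == 0%N)%:R) &
      (~ (forall x, lam x = 1) ->
         forall n : nat, infprod_coef_is (gauss_sum chi lam) q n (lhs_coef chi lam n))].
Proof.
move=> q.
have cardGL0 : forall n, (#|GLset F n|%:R : algC) != 0.
  move=> n; rewrite pnatr_eq0 -lt0n; apply/card_gt0P; exists 1%:M; by rewrite inE unitmx1.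
have hq : (1 < q)%N.
  apply/card_gt1P; exists 0, 1; split => //; rewrite eq_sym; exact: oner_neq0.
split.
- move=> Hl Hc [|n] //; rewrite /lhs_coef /=.
  rewrite (eq_bigr (fun _ => 1)) => [|g]; last first.
    rewrite inE unitmxE Hl mulr1 /chi_ext => hg; case: insubP => [u _ _|]; first exact: Hc.
    by rewrite hg.
  by rewrite sumr_const mulVf // cardGL0.
- move=> Hl Hc [|m] //; rewrite /lhs_coef /=.
  have [u hu] : exists u, chi u != 1.
    case: (boolP [exists u, chi u != 1]) => [/existsP [u hu] | /existsPn H]; first by exists u.
    by exfalso; apply: Hc => x; apply/eqP; move: (H x); rewrite negbK.
  rewrite GLsumE /SM /fM (eq_bigr (fun A => chi_ext chi (\det A))) => [|A _]; last by rewrite Hl mulr1.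
  by rewrite (chi_sum_zero chi_mul m hu) mulr0.
- move=> Hl n.
  have [s hs] : exists s, lam s != 1.
    case: (boolP [exists s, lam s != 1]) => [/existsP [s hs] | /existsPn H]; first by exists s.
    by exfalso; apply: Hl => x; apply/eqP; move: (H x); rewrite negbK.
  have -> : lhs_coef chi lam n = cf (gauss_sum chi lam) q n.
    case: n => [|m]; first by rewrite cf0.
    rewrite /lhs_coef /= GLsumE (SM_formula chi_mul chi_one lam_add lam_zero hs) -gaussE.
    rewrite card_GLset natrM natr_prod /cf prodfV.
    rewrite (eq_bigr (fun i => (q%:R : algC) ^+ i - 1)) => [|i _]; last by rewrite natrB ?expn_gt0 ?(ltn_trans _ hq) // natrX.
    have P0 : \prod_(1 <= i < m.+2) ((q%:R : algC) ^+ i - 1) != 0.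
      rewrite prodf_seq_neq0; apply/allP => i; rewrite mem_index_iota => /andP [hi _].
      by case: i hi => // i _; apply: qX1.
    have A0 : ((#|F| ^ 'C(m.+1, 2))%:R : algC) != 0 by rewrite pnatr_eq0 -lt0n expn_gt0 (ltn_trans _ hq).
    by rewrite invfM [X in _ * X]mulrC mulrACA mulVf // mul1r mulrC.
  exact: conv hq n.
Qed.
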